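(* Let $\Lambda_i\in\mathcal H_I$, $i\in[n]$, $\mathbb P$ atomless, $Y\ge0$ with $1<\mathbb E^{\mathbb P}(Y)<\infty$. Suppose $\overline\Lambda^*$ is attainable and at least one $\Lambda_i$ is constant. Then for all $X\in\mathcal X$ $$\mathop{\square}_{i=1}^n\sup_{\mathbb Q\in\mathcal P(\mathbb P,0,Y)}\Lambda_i\mathrm{VaR}^{\mathbb Q}(X)=\inf\Big\{x\in\mathbb R:\mathbb E^{\mathbb P}(Y\mathds 1_{\{X>x\}})\le\sum_{i=1}^n\lambda_i^+\Big\}.$$
   Context: $\Lambda\mathrm{VaR}^{\mathbb Q}(X)=\inf\{x\in\mathbb R:\mathbb Q(X>x)\le\Lambda(x)\}$; $\mathcal H_I$: increasing functions $\mathbb R\to(0,1)$; $\lambda_i^+=\sup_x\Lambda_i(x)$. $\mathcal P(\mathbb P,0,Y)=\{\mathbb Q\ll\mathbb P:0\le\mathrm d\mathbb Q/\mathrm d\mathbb P\le Y\}$. $\overline\Lambda^*(x)=\sup_{y_1+\dots+y_n=x}\sum_i\Lambda_i(y_i)$, attainable if the supremum is attained for every $x$. Inf-convolution $\mathop{\square}_i\rho_i(X)=\inf\{\sum_i\rho_i(X_i):X_i\in\mathcal X,\sum_iX_i=X\}$, $\mathcal X$ a set of real-valued random variables containing constants, closed under sums, differences, multiplication by indicators. *)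

(* Defs.v *)
From HB Require Import structures.
From mathcomp Require Import all_boot all_order all_algebra.
From mathcomp Require Import all_classical all_reals all_analysis.
Set Implicit Arguments. Unset Strict Implicit. Unset Printing Implicit Defensive.
Import Order.TTheory GRing.Theory Num.Theory.
Local Open Scope classical_set_scope.
Local Open Scope ring_scope.
Local Open Scope ereal_scope.

Section defs.
Context {d : measure_display} {T : measurableType d} {R : realType}.

Definition atomless (P : probability T R) : Prop :=
  forall A : set T, measurable A -> 0 < P A ->
    exists B : set T, [/\ measurable B, B `<=` A, 0 < P B & P B < P A].

Definition in_HI (L : R -> R) : Prop :=
  {homo L : x y / (x <= y)%R} /\ (forall x, (0 < L x)%R /\ (L x < 1)%R).

Definition LVaR (L : R -> R) (Q : probability T R) (X : T -> R) : \bar R :=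
  ereal_inf [set x%:E | x in [set x : R | Q [set w | (x < X w)%R] <= (L x)%:E]].

Definition Pset (P : probability T R) (Y : T -> R) : set (probability T R) :=
  [set Q | exists f : T -> R, [/\ measurable_fun setT f,
     {ae P, forall w, (0 <= f w)%R /\ (f w <= Y w)%R} &
     forall A, measurable A -> Q A = \int[P]_(w in A) (f w)%:E]].

Definition supLVaR (P : probability T R) (Y : T -> R) (L : R -> R)
    (X : T -> R) : \bar R :=
  ereal_sup [set LVaR L Q X | Q in Pset P Y].

Definition admissible (Xs : set (T -> R)) : Prop :=
  [/\ (forall X, Xs X -> measurable_fun setT X),
      (forall c : R, Xs (fun _ => c)),
      (forall X Z, Xs X -> Xs Z -> Xs (fun w => X w + Z w)%R),
      (forall X Z, Xs X -> Xs Z -> Xs (fun w => X w - Z w)%R) &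
      (forall X A, Xs X -> measurable A -> Xs (fun w => X w * \1_A w)%R)].

Definition infconv (n : nat) (Xs : set (T -> R)) (rho : 'I_n -> (T -> R) -> \bar R)
    (X : T -> R) : \bar R :=
  ereal_inf [set \sum_(i < n) rho i (Z i) | Z in
    [set Z : 'I_n -> T -> R | (forall i, Xs (Z i)) /\
                               (forall w, (\sum_(i < n) Z i w)%R = X w)]].
End defs.

(* overline Lambda^* is attainable: for every x the supremum of
   sum_i Lambda_i(y_i) over y_1+...+y_n = x is attained. *)
Definition attainable {R : realType} (n : nat) (L : 'I_n -> R -> R) : Prop :=
  forall x : R, exists y : 'I_n -> R, (\sum_(i < n) y i = x)%R /\
    forall z : 'I_n -> R, (\sum_(i < n) z i = x)%R ->
      (\sum_(i < n) L i (z i) <= \sum_(i < n) L i (y i))%R.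

Definition lam_plus {R : realType} (L : R -> R) : \bar R :=
  ereal_sup (range (fun x => (L x)%:E)).

(* Main.v *)
Require Import Defs.
From HB Require Import structures.
From mathcomp Require Import all_boot all_order all_algebra.
From mathcomp Require Import all_classical all_reals all_analysis.
From mathcomp Require Import measurable_realfun lra.
Import Order.TTheory GRing.Theory Num.Theory.
Local Open Scope classical_set_scope.
Local Open Scope ring_scope.
Local Open Scope ereal_scope.
Set Implicit Arguments. Unset Strict Implicit. Unset Printing Implicit Defensive.

Section dmeas.
Context d (T : measurableType d) (R : realType) (P : probability T R).
Variable h : T -> R.

Definition hpos : T -> R :=
  if `[< measurable_fun setT h >] then fun x => Num.max (h x) 0%R
  else fun _ => 0%R.

Lemma hpos_ge0 x : (0 <= hpos x)%R.
Proof. by rewrite /hpos; case: ifPn => // _; rewrite le_max lexx orbT. Qed.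

Lemma hpos_meas : measurable_fun setT hpos.
Proof.
rewrite /hpos; case: ifPn => [/asboolP mh|_]; last exact: measurable_cst.
by apply: measurable_maxr => //; exact: measurable_cst.
Qed.

Definition dmeas (A : set T) : \bar R := \int[P]_(x in A) (hpos x)%:E.

Let dmeas0 : dmeas set0 = 0.
Proof. by rewrite /dmeas integral_set0. Qed.

Let dmeas_ge0 A : 0 <= dmeas A.
Proof. by apply: integral_ge0 => x _; rewrite lee_fin hpos_ge0. Qed.

Let dmeas_sigma_additive : semi_sigma_additive dmeas.
Proof.
move=> /= F mF tF mUF; rewrite /dmeas; apply: cvg_toP.
  apply: ereal_nondecreasing_is_cvgn => m k mk.
  apply: lee_sum_nneg_natr => // j _ _.
  by apply: integral_ge0 => x _; rewrite lee_fin hpos_ge0.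
rewrite ge0_integral_bigcup//=.
- by apply/measurable_EFinP; apply: measurable_funS hpos_meas.
- by move=> x _; rewrite lee_fin hpos_ge0.
Qed.

HB.instance Definition _ := isMeasure.Build _ _ _ dmeas
  dmeas0 dmeas_ge0 dmeas_sigma_additive.

Lemma dmeasE A : measurable_fun setT h -> (forall x, (0 <= h x)%R) ->
  dmeas A = \int[P]_(x in A) (h x)%:E.
Proof.
move=> mh h0; rewrite /dmeas /hpos; case: ifPn => [_|/asboolP//].
by apply: eq_integral => x _; rewrite max_l.
Qed.

End dmeas.

Section qlow.
Context d (T : measurableType d) (R : realType) (P : probability T R).
Variable Y : T -> R.
Hypothesis mY : measurable_fun setT Y.
Hypothesis Y0 : forall w, (0 <= Y w)%R.
Hypothesis EY1 : 1 < \int[P]_w (Y w)%:E.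
Hypothesis EYoo : \int[P]_w (Y w)%:E < +oo.

Lemma intY_ge0 A : 0 <= \int[P]_(w in A) (Y w)%:E.
Proof. by apply: integral_ge0 => x _; rewrite lee_fin. Qed.

Lemma intY_le A : measurable A -> \int[P]_(w in A) (Y w)%:E <= \int[P]_w (Y w)%:E.
Proof.
move=> mA; apply: ge0_subset_integral => //.
- by apply/measurable_EFinP.
- by move=> x _; rewrite lee_fin.
Qed.

Lemma intY_fin A : measurable A -> \int[P]_(w in A) (Y w)%:E \is a fin_num.
Proof.
move=> mA; rewrite ge0_fin_numE ?intY_ge0//.
exact: le_lt_trans (intY_le mA) EYoo.
Qed.

Lemma intY_setC A : measurable A ->
  \int[P]_w (Y w)%:E = \int[P]_(w in A) (Y w)%:E + \int[P]_(w in ~` A) (Y w)%:E.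
Proof.
move=> mA; rewrite -ge0_integral_setU//.
- by rewrite setUv.
- exact: measurableC.
- by rewrite setUv; apply/measurable_EFinP.
- by move=> x _; rewrite lee_fin.
- by rewrite disj_set2E setICr.
Qed.


Lemma exists_Q (C : set T) (mC : measurable C) (r : R) : (r < 1)%R ->
  r%:E < \int[P]_(w in C) (Y w)%:E -> exists2 Q, Pset P Y Q & r%:E < Q C.
Proof.
move=> r1 rC.
have fC := intY_fin mC.
have fT : \int[P]_w (Y w)%:E \is a fin_num by exact: intY_fin.
set g := fine (\int[P]_(w in C) (Y w)%:E).
set e := fine (\int[P]_w (Y w)%:E).
have gE : \int[P]_(w in C) (Y w)%:E = g%:E by rewrite fineK.
have eE : \int[P]_w (Y w)%:E = e%:E by rewrite fineK.
have cE : \int[P]_(w in ~` C) (Y w)%:E = (e - g)%:E.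
  have fC' : \int[P]_(w in ~` C) (Y w)%:E \is a fin_num.
    by apply: intY_fin; exact: measurableC.
  have H := intY_setC mC.
  rewrite eE in H. rewrite gE in H.  rewrite -(fineK fC') in H. rewrite -EFinD in H.
  have He := EFin_inj H.
  by rewrite -(fineK fC') He (addrC g) addrK.
have e1 : (1 < e)%R by rewrite -lte_fin -eE.
have rg : (r < g)%R by rewrite -lte_fin -gE.
have ge : (g <= e)%R by rewrite -lee_fin -gE -eE; exact: intY_le.
pose k : R := if (1 <= g)%R then 0%R else ((1 - g) / (e - g))%R.
pose m : R := if (1 <= g)%R then g else 1%R.
have k0 : (0 <= k)%R.
  rewrite /k; case: (leP 1%R g) => // g1.
  by apply: divr_ge0; rewrite subr_ge0 // ltW.
have k1 : (k <= 1)%R.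
  rewrite /k; case: (leP 1%R g) => // g1.
  by rewrite ler_pdivrMr ?subr_gt0 ?(lt_trans g1)// mul1r lerB// ltW.
have km : (g + k * (e - g) = m)%R.
  rewrite /k /m; case: (leP 1%R g) => g1; first by rewrite mul0r addr0.
  rewrite divfK ?subrKC//.
  by rewrite subr_eq0 gt_eqF// (lt_trans g1).
have m1 : (1 <= m)%R by rewrite /m; case: (leP 1%R g) => // /ltW.
have m0 : (0 < m)%R by rewrite (lt_le_trans ltr01).
pose h w : R := (Y w * (k + (1 - k) * \1_C w))%R.
have mh : measurable_fun setT h.
  apply: measurable_funM => //; apply: measurable_funD; first exact: measurable_cst.
  by apply: measurable_funM; [exact: measurable_cst|exact: measurable_indic].
have fac0 w : (0 <= k + (1 - k) * \1_C w)%R.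
  by apply: addr_ge0 => //; apply: mulr_ge0; rewrite ?subr_ge0// indicE; case: (_ \in _).
have fac1 w : (k + (1 - k) * \1_C w <= 1)%R.
  rewrite indicE; case: (_ \in _); rewrite ?mulr1 ?mulr0 ?addr0 ?subrKC//.
have h0 w : (0 <= h w)%R by apply: mulr_ge0.
have hY w : (h w <= Y w)%R by rewrite /h ler_piMr.
have hC : \int[P]_(w in C) (h w)%:E = g%:E.
  rewrite -gE; apply: eq_integral => w /set_mem Cw.
  by rewrite /h indicE mem_set// mulr1 subrKC mulr1.
have hCc : \int[P]_(w in ~` C) (h w)%:E = (k * (e - g))%:E.
  rewrite EFinM -cE -ge0_integralZl//; last 4 first. all: try (by apply/measurable_EFinP; apply: measurable_funS mY). all: try (by move=> x _; rewrite lee_fin). all: try (by rewrite lee_fin). all: try exact: measurableC.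
  apply: eq_integral => w /set_mem Cw.
  by rewrite /h indicE memNset// mulr0 addr0 -EFinM mulrC.
have hT : \int[P]_w (h w)%:E = m%:E.
  rewrite -km EFinD -hC -hCc -ge0_integral_setU//.
  - by rewrite setUv.
  - exact: measurableC.
  - by rewrite setUv; apply/measurable_EFinP.
  - by move=> x _; rewrite lee_fin.
  - by rewrite disj_set2E setICr.
pose Q := mnormalize (dmeas P h) P.
have QE A : measurable A -> Q A = \int[P]_(w in A) (h w / m)%:E.
  move=> mA; rewrite /Q /mnormalize /= (dmeasE _ setT mh h0) hT.
  rewrite ifF; last by rewrite eqe gt_eqF.
  rewrite /= (dmeasE _ A mh h0) -ge0_integralZr//.
  - by apply/measurable_EFinP; apply: measurable_funS mh.
  - by move=> x _; rewrite lee_fin.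
  - by rewrite lee_fin invr_ge0 ltW.
have QC : r%:E < Q C.
  rewrite QE// (_ : \int[P]_(w in C) (h w / m)%:E = (g / m)%:E).
    rewrite lte_fin /m; case: ifPn => [g1|_]; last by rewrite divr1.
    by rewrite divff// gt_eqF// (lt_le_trans ltr01 g1).
  rewrite [RHS]EFinM -hC -ge0_integralZr//.
  - by apply/measurable_EFinP; apply: measurable_funS mh.
  - by move=> x _; rewrite lee_fin.
  - by rewrite lee_fin invr_ge0 ltW.
exists Q; last exact: QC.
  exists (fun w => h w / m)%R; split.
  - by apply: measurable_funM => //; exact: measurable_cst.
  - apply: aeW => w; split; first by rewrite divr_ge0// ltW.
    by rewrite ler_pdivrMr// (le_trans (hY w))// ler_peMr.
  - exact: QE.
Qed.

End qlow.

Lemma measurable_gtset d (T : measurableType d) (R : realType) (Z : T -> R) (y : R) :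
  measurable_fun setT Z -> measurable [set w | (y < Z w)%R].
Proof.
move=> mZ.
rewrite (_ : [set w | (y < Z w)%R] = Z @^-1` `]y, +oo[%classic).
  by rewrite -(setTI (_ @^-1` _)); apply: mZ => //; exact: measurable_itv.
by apply/seteqP; split => w /=; rewrite in_itv /= andbT.
Qed.

Section rho.
Context d (T : measurableType d) (R : realType) (P : probability T R).
Variable Y : T -> R.
Hypothesis mY : measurable_fun setT Y.
Hypothesis Y0 : forall w, (0 <= Y w)%R.
Hypothesis EY1 : 1 < \int[P]_w (Y w)%:E.
Hypothesis EYoo : \int[P]_w (Y w)%:E < +oo.

Lemma rho_le (L : R -> R) (HL : in_HI L) (Z : T -> R) (mZ : measurable_fun setT Z)
  (y : R) : \int[P]_(w in [set w | (y < Z w)%R]) (Y w)%:E <= (L y)%:E ->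
  supLVaR P Y L Z <= y%:E.
Proof.
move=> hy; apply: ge_ereal_sup => _ [Q [f [mf aef QA]] <-].
have mS := measurable_gtset y mZ.
apply: ereal_inf_lbound; exists y => //=.
rewrite QA//; apply: le_trans hy.
pose f' w := Num.max (f w) 0%R.
have mf' : measurable_fun setT f'.
  by apply: measurable_maxr => //; exact: measurable_cst.
rewrite (ae_eq_integral (fun w => (f' w)%:E))//.
- apply: ae_ge0_le_integral => //.
  + by move=> x _; rewrite lee_fin le_max lexx orbT.
  + by apply/measurable_EFinP; apply: measurable_funS mf'.
  + by move=> x _; rewrite lee_fin.
  + by apply/measurable_EFinP; apply: measurable_funS mY.
  apply: filterS aef => w [f0 fY] _.
  by rewrite lee_fin /f' max_l.
- by apply/measurable_EFinP; apply: measurable_funS mf.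
- by apply/measurable_EFinP; apply: measurable_funS mf'.
- apply: filterS aef => w [f0 fY] _.
  by rewrite /f' max_l.
Qed.


Lemma rho_ge (L : R -> R) (HL : in_HI L) (Z : T -> R) (mZ : measurable_fun setT Z)
  (y : R) : (L y)%:E < \int[P]_(w in [set w | (y < Z w)%R]) (Y w)%:E ->
  y%:E <= supLVaR P Y L Z.
Proof.
move=> hy.
have mS := measurable_gtset y mZ.
have [Q PQ QC] := exists_Q mY Y0 EY1 EYoo mS (proj2 (proj2 HL y)) hy.
apply: (@le_trans _ _ (LVaR L Q Z)); last first.
  by apply: ereal_sup_ubound; exists Q.
apply: le_ereal_inf_tmp => _ [x /= Qx <-].
rewrite lee_fin; rewrite leNgt; apply/negP => xy.
have : Q [set w | (y < Z w)%R] <= Q [set w | (x < Z w)%R].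
  apply: le_measure; rewrite ?inE //; first exact: measurable_gtset.
  by move=> w /= /(lt_trans xy).
move=> /(lt_le_trans QC) /lt_le_trans /(_ Qx).
rewrite lte_fin; apply/negP; rewrite -leNgt.
by apply: (proj1 HL); exact: ltW.
Qed.


Lemma rho_gtNy (L : R -> R) (HL : in_HI L) (Z : T -> R) (mZ : measurable_fun setT Z) :
  -oo < supLVaR P Y L Z.
Proof.
suff [k hk] : exists k : nat,
    (L (- k%:R))%:E < \int[P]_(w in [set w | (- k%:R < Z w)%R]) (Y w)%:E.
  exact: lt_le_trans (ltNyr _) (rho_ge HL mZ hk).
apply: contrapT => /forallNP H.
have H' k : \int[P]_(w in [set w | (- k%:R < Z w)%R]) (Y w)%:E <= (L 0%R)%:E.
  apply: (@le_trans _ _ (L (- k%:R))%:E).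
    by rewrite leNgt; apply/negP => hk; apply: (H k).
  by rewrite lee_fin; apply: (proj1 HL); rewrite oppr_le0.
pose mu := dmeas P Y.
pose F k := [set w | (- k%:R < Z w)%R].
have mF k : measurable (F k) by exact: measurable_gtset.
have UF : \bigcup_k F k = setT.
  apply/seteqP; split => // w _.
  exists (Num.bound `|Z w|%R) => //; rewrite /F /=.
  rewrite ltrNl (le_lt_trans _ (archi_boundP (normr_ge0 (Z w))))//.
  by rewrite -normrN ler_norm.
have ndF : nondecreasing_seq F.
  move=> m k mk; apply/subsetPset => w; rewrite /F /=; apply: le_lt_trans.
  by rewrite lerN2 ler_nat.
have cv : mu \o F @ \oo --> mu (\bigcup_k F k).
  apply: nondecreasing_cvg_mu => //; rewrite UF; exact: measurableT.
have lim_le : lim (mu \o F @ \oo) <= (L 0%R)%:E.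
  apply: lime_le; first by apply/cvg_ex; eexists; exact: cv.
  by apply: nearW => k /=; rewrite /mu dmeasE//; exact: H'.
rewrite (cvg_lim _ cv)// UF /mu dmeasE// in lim_le.
have := lt_le_trans EY1 lim_le; rewrite lte_fin; apply/negP; rewrite -leNgt.
exact: ltW (proj2 (proj2 HL 0%R)).
Qed.

End rho.

Section sierp.
Context d (T : measurableType d) (R : realType).
Variable mu : {measure set T -> \bar R}.
Hypothesis mufin : mu setT < +oo.

Lemma muF X : measurable X -> mu X \is a fin_num.
Proof.
move=> mX; rewrite ge0_fin_numE//; apply: le_lt_trans mufin.
by apply: le_measure; rewrite ?inE.
Qed.

Definition m X := fine (mu X).

Lemma muE X : measurable X -> mu X = (m X)%:E.
Proof. by move=> mX; rewrite /m fineK// muF. Qed.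

Lemma m_ge0 X : (0 <= m X)%R.
Proof. exact: fine_ge0. Qed.

Lemma m_le X Z : measurable X -> measurable Z -> X `<=` Z -> (m X <= m Z)%R.
Proof.
move=> mX mZ XZ; rewrite -lee_fin -!muE//.
by apply: le_measure; rewrite ?inE.
Qed.

Lemma m_U X Z : measurable X -> measurable Z -> X `&` Z = set0 ->
  m (X `|` Z) = (m X + m Z)%R.
Proof.
move=> mX mZ XZ; apply: EFin_inj; rewrite EFinD -!muE//; last exact: measurableU.
exact: measureU.
Qed.

Lemma m_D X Z : measurable X -> measurable Z -> Z `<=` X ->
  m (X `\` Z) = (m X - m Z)%R.
Proof.
move=> mX mZ ZX.
have -> : m X = (m (X `\` Z) + m Z)%R.
  rewrite -m_U//; [by rewrite setUC setDUK| exact: measurableD| by rewrite setIC setDIK].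
by rewrite addrK.
Qed.


Hypothesis matom : forall A, measurable A -> (0 < m A)%R ->
  exists B, [/\ measurable B, B `<=` A, (0 < m B)%R & (m B < m A)%R].

Lemma half A : measurable A -> (0 < m A)%R ->
  exists B, [/\ measurable B, B `<=` A, (0 < m B)%R & (m B * 2 <= m A)%R].
Proof.
move=> mA mA0; have [B [mB BA B0 BA']] := matom mA mA0.
have [h|h] := leP (m B * 2)%R (m A); first by exists B.
exists (A `\` B); split => //; first exact: measurableD.
  by rewrite m_D// subr_gt0.
by rewrite m_D//; lra.
Qed.

Lemma small_k A : measurable A -> (0 < m A)%R -> forall k : nat,
  exists B, [/\ measurable B, B `<=` A, (0 < m B)%R & (m B * 2 ^+ k <= m A)%R].
Proof.
move=> mA mA0; elim=> [|k [B [mB BA B0 Bk]]].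
  by exists A; split => //; rewrite expr0 mulr1.
have [B' [mB' B'B B'0 B'2]] := half mB B0.
exists B'; split => //; first exact: subset_trans B'B BA.
apply: le_trans Bk; rewrite exprS mulrA ler_wpM2r//.
Qed.

Lemma small_e A (e : R) : measurable A -> (0 < m A)%R -> (0 < e)%R ->
  exists B, [/\ measurable B, B `<=` A, (0 < m B)%R & (m B <= e)%R].
Proof.
move=> mA mA0 e0.
have hb := archi_boundP (divr_ge0 (m_ge0 A) (ltW e0)).
set k := Num.bound _ in hb.
have [B [mB BA B0 Bk]] := small_k mA mA0 k.
exists B; split => //.
have k2 : (k%:R <= 2 ^+ k :> R)%R.
  by rewrite -natrX ler_nat ltnW// ltn_expl.
have h : (m A / e < 2 ^+ k)%R := lt_le_trans hb k2.
rewrite ltr_pdivrMr// in h.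
have p2 : (0 < 2 ^+ k :> R)%R by apply: exprn_gt0.
rewrite -(ler_pM2r p2); lra.
Qed.


Lemma m0 : m set0 = 0%R.
Proof. by rewrite /m measure0. Qed.

Lemma greedy_step A (t : R) : exists f : set T -> set T, forall D,
  [/\ measurable D, D `<=` A & (m D <= t)%R] ->
  [/\ measurable (f D), f D `<=` A `\` D, (m D + m (f D) <= t)%R &
    forall C', measurable C' -> C' `<=` A `\` D -> (m D + m C' <= t)%R ->
      (m C' <= 2 * m (f D))%R].
Proof.
suff H : forall D, exists C, [/\ measurable D, D `<=` A & (m D <= t)%R] ->
  [/\ measurable C, C `<=` A `\` D, (m D + m C <= t)%R &
    forall C', measurable C' -> C' `<=` A `\` D -> (m D + m C' <= t)%R ->
      (m C' <= 2 * m C)%R].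
  by have [f hf] := choice H; exists f.
move=> D.
have [[mD DA Dt]|ngD] := pselect [/\ measurable D, D `<=` A & (m D <= t)%R];
  last by exists set0.
pose S := [set m C' | C' in [set C' | [/\ measurable C', C' `<=` A `\` D &
   (m D + m C' <= t)%R]]].
have S0 : S 0%R by exists set0; [rewrite /= m0 addr0; split | exact: m0].
have Sub : ubound S t.
  move=> _ [C' [_ _ h] <-]; have := m_ge0 D; lra.
have hS : has_sup S by split; [exists 0%R | exists t].
have [s0|s0] := leP (sup S) 0%R.
  exists set0 => _; split => //; first by rewrite m0 addr0.
  move=> C' mC' C'A h; rewrite m0 mulr0.
  apply: le_trans s0; apply: sup_upper_bound => //; by exists C'.
have [_ [C [mC CA Ct] <-] hC] := sup_adherent (divr_gt0 s0 (ltr0Sn _ 1)) hS.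
exists C => _; split => // C' mC' C'A h.
have : (m C' <= sup S)%R by apply: sup_upper_bound => //; exists C'.
lra.
Qed.


Lemma exact_val A (t : R) : measurable A -> (0 <= t)%R -> (t <= m A)%R ->
  exists B, [/\ measurable B, B `<=` A & m B = t].
Proof.
move=> mA t0 tA.
have [f hf] := greedy_step A t.
pose D k := iter k (fun X => X `|` f X) set0.
have DS k : D k.+1 = D k `|` f (D k) by [].
have gD k : [/\ measurable (D k), D k `<=` A & (m (D k) <= t)%R].
  elim: k => [|k [mDk DkA Dkt]]; first by rewrite /D /= m0; split.
  have [mf fA ft _] := hf _ (And3 mDk DkA Dkt).
  have disj : D k `&` f (D k) = set0.
    by apply/seteqP; split => // w [Dw /fA [_ nDw]].
  rewrite DS m_U//; split => //; first exact: measurableU.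
  by move=> w [/DkA|/fA []].
have mDS k : m (D k.+1) = (m (D k) + m (f (D k)))%R.
  have [mDk DkA Dkt] := gD k.
  have [mf fA ft _] := hf _ (gD k).
  rewrite DS m_U//.
  by apply/seteqP; split => // w [Dw /fA [_ nDw]].
have ndD : nondecreasing_seq D.
  by apply/nondecreasing_seqP => k; apply/subsetPset; rewrite DS; exact: subsetUl.
pose U := \bigcup_k D k.
have mU : measurable U by apply: bigcupT_measurable => k; case: (gD k).
have UA : U `<=` A by move=> w [k _]; case: (gD k) => _ + _; apply.
have DU k : D k `<=` U by move=> w Dw; exists k.
have Ut : (m U <= t)%R.
  have cv : mu \o D @ \oo --> mu U.
    by apply: nondecreasing_cvg_mu => // k; case: (gD k).
  have : lim (mu \o D @ \oo) <= t%:E.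
    apply: lime_le; first by apply/cvg_ex; eexists; exact: cv.
    by apply: nearW => k /=; case: (gD k) => mDk _ Dkt; rewrite muE// lee_fin.
  by rewrite (cvg_lim _ cv)// muE// lee_fin.
have [Ult|tU] := ltP (m U) t; last first.
  by exists U; split => //; apply/eqP; rewrite eq_le Ut.
exfalso.
have AU0 : (0 < m (A `\` U))%R by rewrite m_D// subr_gt0 (lt_le_trans Ult).
have tU0 : (0 < t - m U)%R by rewrite subr_gt0.
have [C [mC CAU C0 Ce]] := small_e (measurableD mA mU) AU0 tU0.
have key k : (m C <= 2 * m (f (D k)))%R.
  have [_ _ _ H] := hf _ (gD k); apply: H => //.
    by move=> w /CAU [Aw nUw]; split => // /DU.
  have : (m (D k) <= m U)%R by apply: m_le => //; case: (gD k).
  lra.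
have lin k : (k%:R * m C <= 2 * m (D k))%R.
  elim: k => [|k IH]; first by rewrite mul0r /D /= m0 mulr0.
  rewrite mDS -natr1 mulrDl mul1r; have := key k; lra.
have hb := archi_boundP (divr_ge0 (mulr_ge0 (ler0n _ 2) t0) (ltW C0)).
set k := Num.bound _ in hb.
have := lin k; have := gD k => -[_ _ Dkt].
rewrite ltr_pdivrMr// in hb.
lra.
Qed.


Lemma partition_nat (n : nat) (c : nat -> R) (A : set T) : measurable A ->
  (forall i, (0 <= c i)%R) -> (m A <= \sum_(i < n.+1) c i)%R ->
  exists C : nat -> set T, [/\ forall i, measurable (C i),
     forall w, exists2 i, (i < n.+1)%N & C i w,
     forall i j w, C i w -> C j w -> i = j &
     forall i, (m (C i `&` A) <= c i)%R].
Proof.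
elim: n c A => [|n IH] c A mA c0 hA.
  exists (fun i => if i is _.+1 then set0 else setT); split.
  - by case.
  - by move=> w; exists 0%N.
  - by case=> [|i] [|j] w.
  - case=> [|i]; last by rewrite set0I m0.
    by rewrite setTI; move: hA; rewrite big_ord_recl big_ord0 addr0.
rewrite big_ord_recl /= in hA.
have [t0|t0] := leP (c 0%N) (m A).
- have [B [mB BA mBc]] := exact_val mA (c0 0%N) t0.
  have hA' : (m (A `\` B) <= \sum_(i < n.+1) c i.+1)%R.
    rewrite m_D// mBc; move: hA; rewrite /bump /=.
    under eq_bigr do rewrite /bump /= add1n.
    lra.
  have [C' [mC' cov dis bd]] := IH (fun i => c i.+1) _ (measurableD mA mB) (fun i => c0 _) hA'.
  exists (fun i => if i is i'.+1 then C' i' `\` B else B); split.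
  + by case=> [|i] //; apply: measurableD.
  + move=> w; have [Bw|nBw] := pselect (B w); first by exists 0%N.
    by have [i ilt Ciw] := cov w; exists i.+1.
  + case=> [|i] [|j] w //=; [by move=> ? [] | by move=> [] |].
    by move=> [/dis h _] [/h -> _].
  + case=> [|i].
      by rewrite setIidl// mBc.
    rewrite (_ : (C' i `\` B) `&` A = C' i `&` (A `\` B)); first exact: bd.
    by apply/seteqP; split => w /=; tauto.
- exists (fun i => if i is _.+1 then set0 else setT); split.
  + by case.
  + by move=> w; exists 0%N.
  + by case=> [|i] [|j] w.
  + case=> [|i]; last by rewrite set0I m0.
    by rewrite setTI ltW.
Qed.

End sierp.

Section atomY.
Context d (T : measurableType d) (R : realType) (P : probability T R).
Variable Y : T -> R.
Hypothesis mY : measurable_fun setT Y.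
Hypothesis Y0 : forall w, (0 <= Y w)%R.

Lemma posY B : measurable B -> (forall w, B w -> (0 < Y w)%R) -> 0 < P B ->
  0 < \int[P]_(w in B) (Y w)%:E.
Proof.
move=> mB BY PB; rewrite lt_neqAle intY_ge0// andbT; apply/negP => /eqP H0.
pose Bk (k : nat) := B `&` [set w | ((k.+1%:R)^-1 < Y w)%R].
have mBk k : measurable (Bk k) by apply: measurableI => //; exact: measurable_gtset.
have PBk k : P (Bk k) = 0.
  apply/eqP; rewrite -measure_le0.
  have : ((k.+1%:R)^-1)%:E * P (Bk k) <= 0.
    have sub : \int[P]_(w in Bk k) (Y w)%:E <= \int[P]_(w in B) (Y w)%:E.
      apply: ge0_subset_integral => //.
      - by apply/measurable_EFinP; apply: measurable_funS mY.
      - by move=> x _; rewrite lee_fin.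
      - by move=> w [].
    have sub' : \int[P]_(w in Bk k) (Y w)%:E <= 0 by rewrite H0.
    rewrite -integral_cst//; apply: le_trans sub'.
    apply: ge0_le_integral => //.
    all: try (by move=> x _; rewrite lee_fin invr_ge0).
    all: try (by apply/measurable_EFinP; apply: measurable_funS mY).
    all: try (by move=> x [_ /= h]; rewrite lee_fin ltW).
    all: try (by move=> x _; rewrite lee_fin).
    all: idtac.
  by rewrite pmule_rle0// lte_fin invr_gt0.
have UB : \bigcup_k Bk k = B.
  apply/seteqP; split => [w [k _ []//]|w Bw].
  have Yw := BY w Bw.
  exists (Num.bound (Y w)^-1) => //; split => //=.
  have h : ((Y w)^-1 < (Num.bound (Y w)^-1).+1%:R)%R.
    by apply: lt_trans (archi_boundP _) _; rewrite ?ltr_nat// invr_ge0 ltW.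
  by rewrite invf_plt ?posrE ?ltr0Sn.
have ndB : nondecreasing_seq Bk.
  apply/nondecreasing_seqP => k; apply/subsetPset => w [Bw /= h]; split => //=.
  apply: le_lt_trans h; rewrite lef_pV2 ?posrE ?ltr0Sn// ler_nat.
  by [].
have cv : P \o Bk @ \oo --> P (\bigcup_k Bk k).
  by apply: nondecreasing_cvg_mu => //; rewrite UB.
have : lim (P \o Bk @ \oo) <= 0.
  apply: lime_le; first by apply/cvg_ex; eexists; exact: cv.
  by apply: nearW => k /=; rewrite PBk.
rewrite (cvg_lim _ cv)// UB => h.
by move: (lt_le_trans PB h); rewrite ltxx.
Qed.


Hypothesis EYoo : \int[P]_w (Y w)%:E < +oo.

Lemma dmeas_fin : dmeas P Y setT < +oo.
Proof. by rewrite dmeasE. Qed.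

Lemma dmeas_atom : atomless P -> forall A, measurable A ->
  (0 < m (dmeas P Y) A)%R -> exists B, [/\ measurable B, B `<=` A,
  (0 < m (dmeas P Y) B)%R & (m (dmeas P Y) B < m (dmeas P Y) A)%R].
Proof.
move=> Patom A mA mA0.
have mE X : (dmeas P Y) X = \int[P]_(w in X) (Y w)%:E by rewrite dmeasE.
pose S := [set w | (0 < Y w)%R].
have mS : measurable S by exact: measurable_gtset.
pose A' := A `&` S.
have mA' : measurable A' by exact: measurableI.
have hAA' : (dmeas P Y) A = (dmeas P Y) A'.
  rewrite (measureDI (dmeas P Y) mA mS) -/A'.
  rewrite [X in X + _](_ : _ = 0) ?add0e//.
  apply: eq_trans (dmeasE _ _ mY Y0) _; rewrite (eq_integral (cst 0)) ?integral0// => w /set_mem [_ /= h].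
  congr EFin; apply/eqP; rewrite eq_le Y0 andbT leNgt; exact/negP.
have PA' : 0 < P A'.
  rewrite lt_neqAle measure_ge0 andbT; apply/negP => /eqP PA0.
  move: mA0; rewrite /m /= hAA' mE null_set_integral//; last first.
    by apply/measurable_EFinP; apply: measurable_funS mY.
  by rewrite ltxx.
have [B [mB BA' PB0 PBA]] := Patom A' mA' PA'.
have muB : 0 < (dmeas P Y) B.
  rewrite mE; apply: posY => //; by move=> w /BA' [].
have muR : 0 < (dmeas P Y) (A' `\` B).
  rewrite mE; apply: posY => //; first exact: measurableD.
    by move=> w [[_ h] _].
  rewrite measureD// ?(setIidr BA') ?sube_gt0//.
  by apply: le_lt_trans (probability_le1 _ mA') _; rewrite ltry.
have fin := dmeas_fin.
exists B; split => //; first by move=> w /BA' [].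
  by rewrite -lte_fin -(muE fin mB).
have h1 : m (dmeas P Y) A = m (dmeas P Y) A' by rewrite /m /= hAA'.
have h2 := m_D fin mA' mB BA'.
have h3 : (0 < m (dmeas P Y) (A' `\` B))%R by rewrite -lte_fin -(muE fin) //; exact: measurableD.
rewrite h1; lra.
Qed.

End atomY.

Section main.
Context d (T : measurableType d) (R : realType) (P : probability T R).
Variable Y : T -> R.
Hypothesis mY : measurable_fun setT Y.
Hypothesis Y0 : forall w, (0 <= Y w)%R.
Hypothesis EY1 : 1 < \int[P]_w (Y w)%:E.
Hypothesis EYoo : \int[P]_w (Y w)%:E < +oo.
Variable n : nat.
Variable L : 'I_n -> R -> R.
Hypothesis HL : forall i, in_HI (L i).
Variable lam : 'I_n -> R.
Hypothesis lamE : forall i, lam_plus (L i) = (lam i)%:E.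
Hypothesis Llam : forall i t, (L i t <= lam i)%R.
Hypothesis n0 : (0 < n)%N.

Lemma lower X (Z : 'I_n -> T -> R) : (forall i, measurable_fun setT (Z i)) ->
  (forall w, (\sum_(i < n) Z i w)%R = X w) ->
  ereal_inf [set x%:E | x in [set x : R |
      \int[P]_(w in [set w | (x < X w)%R]) (Y w)%:E <= \sum_(i < n) lam_plus (L i)]]
  <= \sum_(i < n) supLVaR P Y (L i) (Z i).
Proof.
move=> mZ sZ.
have Ninf i : supLVaR P Y (L i) (Z i) != -oo.
  by rewrite gt_eqF// (rho_gtNy mY Y0 EY1 EYoo (HL i) (mZ i)).
have [->|Hy] := eqVneq (\sum_(i < n) supLVaR P Y (L i) (Z i)) +oo; first exact: leey.
have fin i : supLVaR P Y (L i) (Z i) \is a fin_num.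
  rewrite fin_numE Ninf /=; apply/negP => /eqP hi.
  move/negP: Hy; apply; apply/eqP/esum_eqyP; first by move=> j _; exact: Ninf.
  by exists i; rewrite mem_index_enum.
pose r i := fine (supLVaR P Y (L i) (Z i)).
have sE : \sum_(i < n) supLVaR P Y (L i) (Z i) = (\sum_(i < n) r i)%:E.
  by rewrite -sumEFin; apply: eq_bigr => i _; rewrite /r fineK.
rewrite sE; apply/lee_addgt0Pr => e e0.
pose yv i := (r i + e / n%:R)%R.
have sy : (\sum_(i < n) yv i = \sum_(i < n) r i + e)%R.
  rewrite big_split /= sumr_const card_ord -[X in (_ + X)%R]mulr_natr divfK//.
  by rewrite pnatr_eq0 -lt0n.
have hi i : \int[P]_(w in [set w | (yv i < Z i w)%R]) (Y w)%:E <= (lam i)%:E.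
  apply: (@le_trans _ _ (L i (yv i))%:E); last by rewrite lee_fin.
  rewrite leNgt; apply/negP => /(rho_ge mY Y0 EY1 EYoo (HL i) (mZ i)).
  rewrite -(fineK (fin i)) -/(r i) lee_fin /yv; apply/negP; rewrite -ltNge.
  by rewrite ltrDl divr_gt0// ltr0n.
apply: ereal_inf_lbound; exists (\sum_(i < n) yv i)%R; last by rewrite sy EFinD.
have sl : \sum_(i < n) lam_plus (L i) = (\sum_(i < n) lam i)%:E.
  by rewrite -sumEFin; apply: eq_bigr => i _; exact: lamE.
rewrite /= sl.
pose io : 'I_n := Ordinal n0.
pose F k := [set w | (yv (insubd io k) < Z (insubd io k) w)%R].
have mF k : measurable (F k) by apply: measurable_gtset.
have mA : measurable [set w | (\sum_(i < n) yv i < X w)%R].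
  rewrite (_ : [set w | _] = [set w | (\sum_(i < n) yv i < \sum_(i < n) Z i w)%R]).
    by apply: measurable_gtset; exact: measurable_sum.
  by apply/seteqP; split => w /=; rewrite sZ.
have sub : [set w | (\sum_(i < n) yv i < X w)%R] `<=` \big[setU/set0]_(k < n) F k.
  move=> w /=; rewrite -sZ => hw.
  rewrite -bigcup_mkord.
  have [i hi'] : exists i, (yv i < Z i w)%R.
    apply: contrapT => /forallNP H; move: hw; apply/negP; rewrite -leNgt.
    by apply: ler_sum => i _; rewrite leNgt; apply/negP; apply: H.
  by exists i => //=; rewrite /F /= valKd.
have := @content_subadditive _ _ _ (dmeas P Y) _ F n (fun k _ => mF k) mA sub.
rewrite /= dmeasE// => H; apply: le_trans H _.
rewrite -sumEFin; apply: lee_sum => k _; rewrite /= dmeasE//.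
rewrite /F valKd; exact: hi.
Qed.


Lemma upper (Xs : set (T -> R)) X (Xadm : admissible Xs) (XsX : Xs X)
  (Patom : atomless P) (i0 : 'I_n) (yopt : 'I_n -> R)
  (hy : forall i, L i (yopt i) = lam i) (Lc : forall t, L i0 t = lam i0) (x : R) :
  \int[P]_(w in [set w | (x < X w)%R]) (Y w)%:E <= \sum_(i < n) lam_plus (L i) ->
  infconv Xs (fun i => supLVaR P Y (L i)) X <= x%:E.
Proof.
move=> hx.
have [mXs cst add sub mul] := Xadm.
have fin := dmeas_fin mY Y0 EYoo.
have atom := dmeas_atom mY Y0 EYoo Patom.
have sl : \sum_(i < n) lam_plus (L i) = (\sum_(i < n) lam i)%:E.
  by rewrite -sumEFin; apply: eq_bigr => i _; exact: lamE.
have lam0 i : (0 <= lam i)%R.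
  by rewrite -hy; apply: ltW; case: (proj2 (HL i) (yopt i)).
pose io : 'I_n := Ordinal n0.
pose c k := lam (insubd io k).
pose A := [set w | (x < X w)%R].
have mA : measurable A by apply: measurable_gtset; exact: mXs.
have mAle : (m (dmeas P Y) A <= \sum_(k < n.-1.+1) c k)%R.
  rewrite (prednK n0) -lee_fin -(muE fin mA) /= dmeasE//.
  rewrite (eq_bigr (fun i : 'I_n => lam i)); first by rewrite -sl.
  by move=> i _; rewrite /c valKd.
have [Cn [mC cov dis bd]] := @partition_nat _ _ _ _ fin atom n.-1 c A mA (fun k => lam0 _) mAle.
rewrite (prednK n0) in cov.
pose C (i : 'I_n) := Cn (val i).
pose a i := if i == i0 then (x - \sum_(j < n | j != i0) yopt j)%R else yopt i.
pose Z (i : 'I_n) w := ((X w - x) * \1_(C i) w + a i)%R.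
have XsZ i : Xs (Z i).
  have H1 := sub _ _ (mul X _ XsX (mC (val i))) (mul (fun _ => x) _ (cst x) (mC (val i))).
  have H2 := add _ _ H1 (cst (a i)).
  suff <- : (fun w => (X w * \1_(Cn (val i)) w - x * \1_(Cn (val i)) w) + a i)%R = Z i.
    exact: H2.
  by apply/funext => w; rewrite /Z mulrBl.
have mZ i : measurable_fun setT (Z i) by exact: mXs.
have sa : (\sum_(i < n) a i = x)%R.
  rewrite (bigD1 i0)//= {1}/a eqxx.
  rewrite (eq_bigr yopt) ?subrK// => i /negbTE hi; by rewrite /a hi.
have sind w : (\sum_(i < n) \1_(C i) w = 1 :> R)%R.
  have [k hk Ckw] := cov w.
  rewrite (bigD1 (Ordinal hk))//= /C /= indicE mem_set// big1 ?addr0// => j hj.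
  rewrite indicE memNset// => Cjw; move/negP: hj; apply; apply/eqP/val_inj => /=.
  exact: dis Cjw Ckw.
have H : infconv Xs (fun i => supLVaR P Y (L i)) X <=
    \sum_(i < n) supLVaR P Y (L i) (Z i).
  apply: ereal_inf_lbound; exists Z => //; split => // w.
  rewrite /Z big_split /= sa -mulr_sumr sind mulr1 subrK//.
apply: le_trans H _.
rewrite -sa -sumEFin; apply: lee_sum => i _.
apply: (rho_le mY Y0 (HL i) (mZ i)).
have La : L i (a i) = lam i.
  by rewrite /a; case: eqP => [->|_]; [exact: Lc | exact: hy].
rewrite La.
have mCA : measurable (C i `&` A) by apply: measurableI; [exact: mC | exact: mA].
apply: (@le_trans _ _ (\int[P]_(w in C i `&` A) (Y w)%:E)).
  apply: ge0_subset_integral => //.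
  - exact: measurable_gtset.
  - by apply/measurable_EFinP; apply: measurable_funS mY.
  - by move=> w _; rewrite lee_fin.
  - move=> w /=; rewrite /Z ltrDr indicE.
    case: (boolP (w \in C i)) => [/set_mem Cw|]; last by rewrite mulr0 ltxx.
    by rewrite mulr1 subr_gt0.
have := muE fin mCA; rewrite /= dmeasE// => ->.
rewrite lee_fin; apply: le_trans (bd (val i)) _.
by rewrite /c valKd.
Qed.

End main.

Unset Implicit Arguments.

Lemma att_max (R : realType) (n : nat) (L : 'I_n -> R -> R) (i0 : 'I_n) (c : R) :
  (forall x, L i0 x = c) -> attainable L ->
  exists yopt : 'I_n -> R, forall j t, (L j t <= L j (yopt j))%R.
Proof.
move=> Lc hatt; have [y [sy hmax]] := hatt 0%R.
exists y => j t.
have [->|ji0] := eqVneq j i0; first by rewrite !Lc.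
have i0j : i0 != j by rewrite eq_sym.
pose z i := if i == j then t else if i == i0 then (y i0 + y j - t)%R else y i.
have hz : (\sum_(i < n) z i = 0)%R.
  rewrite -{}[in RHS]sy (bigD1 j)//= [in RHS](bigD1 j)//= (bigD1 i0)//=.
  rewrite [in RHS](bigD1 i0)//= /z eqxx (negbTE i0j) eqxx.
  rewrite (eq_bigr y); first lra.
  by move=> i /andP[/negbTE -> /negbTE ->].
have := hmax z hz.
rewrite (bigD1 j)//= [in X in (_ <= X)%R](bigD1 j)//= (bigD1 i0)//=.
rewrite [in X in (_ <= X)%R](bigD1 i0)//= /z eqxx (negbTE i0j) eqxx !Lc.
rewrite (eq_bigr (fun i => L i (y i))); first lra.
by move=> i /andP[/negbTE -> /negbTE ->].
Qed.

Theorem mainTheorem18 (d : measure_display) (T : measurableType d) (R : realType)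
  (P : probability T R) (Y : T -> R) (n : nat) (L : 'I_n -> R -> R)
  (Xs : set (T -> R)) :
  atomless P ->
  measurable_fun setT Y -> (forall w, (0 <= Y w)%R) ->
  1 < \int[P]_w (Y w)%:E -> \int[P]_w (Y w)%:E < +oo ->
  (forall i, in_HI (L i)) ->
  attainable L ->
  (exists i, exists c : R, forall x, L i x = c) ->
  admissible Xs ->
  forall X, Xs X ->
    infconv Xs (fun i => supLVaR P Y (L i)) X =
    ereal_inf [set x%:E | x in [set x : R |
      \int[P]_(w in [set w | (x < X w)%R]) (Y w)%:E <= \sum_(i < n) lam_plus (L i)]].
Proof.
move=> Patom mY Y0 EY1 EYoo HL hatt [i0 [c Lc]] Xadm X XsX.
have n0 : (0 < n)%N by apply: leq_ltn_trans (ltn_ord i0).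
have [yopt Lmax] := att_max _ _ L i0 c Lc hatt.
pose lam i := L i (yopt i).
have lamE i : lam_plus (L i) = (lam i)%:E.
  apply/eqP; rewrite eq_le; apply/andP; split.
    by apply: ge_ereal_sup => _ [t _ <-]; rewrite lee_fin; exact: Lmax.
  by apply: ereal_sup_ubound; exists (yopt i).
have Lc' t : L i0 t = lam i0 by rewrite /lam !Lc.
apply/eqP; rewrite eq_le; apply/andP; split.
  apply: le_ereal_inf_tmp => _ [x hx <-].
  exact: (upper mY Y0 EYoo HL lamE n0 Xadm XsX Patom (fun i => erefl) Lc' hx).
apply: le_ereal_inf_tmp => _ [Z [XsZ sZ] <-].
have [mXs _ _ _ _] := Xadm.
exact: (lower mY Y0 EY1 EYoo HL lamE Lmax n0 (fun i => mXs _ (XsZ i)) sZ).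
Qed.
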